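(* Let $G$ be a quasitopological group. Then $G$ is dense-ultraconnected if and only if the topology of $G$ is indiscrete.
   Context: A quasitopological group is a group with a topology for which multiplication is separately continuous and inversion is continuous; no separation axioms assumed. A space is ultraconnected if it contains no two disjoint non-empty closed subsets; a space is dense-ultraconnected if every dense subset of it (with the subspace topology) is ultraconnected. *)

(* Defs.v *)
From HB Require Import structures.
From mathcomp Require Import all_boot all_algebra.
From mathcomp Require Import all_classical all_reals topology.
Set Implicit Arguments. Unset Strict Implicit. Unset Printing Implicit Defensive.
Local Open Scope classical_set_scope.

Definition is_group (T : Type) (mul : T -> T -> T) (inv : T -> T) (e : T) : Prop :=
  [/\ (forall x y z, mul x (mul y z) = mul (mul x y) z),
      (forall x, mul e x = x /\ mul x e = x) &
      (forall x, mul (inv x) x = e /\ mul x (inv x) = e)].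

Definition quasitopological_group (T : topologicalType)
  (mul : T -> T -> T) (inv : T -> T) (e : T) : Prop :=
  [/\ is_group mul inv e,
      (forall a : T, continuous (mul a)),
      (forall a : T, continuous (fun x => mul x a)) &
      continuous inv].

(* Closed subsets of the subspace D are exactly
   the sets D `&` C with C closed in T. *)
Definition subspace_ultraconnected (T : topologicalType) (D : set T) : Prop :=
  forall A B : set T,
    (exists C, closed C /\ A = D `&` C) ->
    (exists C, closed C /\ B = D `&` C) ->
    A !=set0 -> B !=set0 -> A `&` B !=set0.

Definition dense_ultraconnected (T : topologicalType) : Prop :=
  forall D : set T, dense D -> subspace_ultraconnected D.

Definition indiscrete (T : topologicalType) : Prop :=
  forall U : set T, open U -> U = set0 \/ U = setT.

(* Main.v *)
Require Import Defs.
From mathcomp Require Import all_boot all_algebra.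
From mathcomp Require Import all_classical all_reals topology.
Local Open Scope classical_set_scope.

Lemma closed_full (T : topologicalType) (C : set T) :
  indiscrete T -> closed C -> C !=set0 -> forall p, C p.
Proof.
move=> hI cC [c Cc] p.
have oC : open (~` C) by rewrite openC.
case: (hI _ oC) => h.
- apply: contrapT => np.
  have : (~` C) p by [].
  by rewrite h.
- have : (~` C) c by rewrite h.
  by [].
Qed.

Theorem mainTheorem20 (T : topologicalType) (mul : T -> T -> T) (inv : T -> T) (e : T) :
  quasitopological_group mul inv e ->
  (dense_ultraconnected T <-> indiscrete T).
Proof.
move=> [[hA hE hV] hl hr hi]; split.
- move=> hD.
  pose R (a b : T) := forall V : set T, open V -> V a -> V b.
  have symR : forall z y, R z y -> R y z.
    move=> z y Rzy V oV Vy.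
    pose f := fun w => mul y (mul (inv w) z).
    have ofV : open (f @^-1` V).
      exact: ((continuousP _).1 hi _ ((continuousP _).1 (hr z) _
               ((continuousP _).1 (hl y) _ oV))).
    have fy : f y = z by rewrite /f hA (hV y).2 (hE z).1.
    have fz : f z = y by rewrite /f (hV z).1 (hE y).2.
    have : (f @^-1` V) y by apply: Rzy => //; rewrite /= fz.
    by rewrite /= fy.
  have clR : forall w x, closure [set x] w -> R w x.
    move=> w x cw V oV Vw.
    have [p [/= -> Vp]] := cw V (open_nbhs_nbhs (conj oV Vw)).
    exact: Vp.
  move=> U oU; case: (pselect (U !=set0)) => [[x Ux]|hn]; last first.
    left; apply/seteqP; split => p // Up; apply: hn; by exists p.
  right; apply/seteqP; split => // y _.
  have dT : dense (@setT T).
    by move=> O [o Oo] _; exists o.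
  have [w [[_ wx] [_ wy]]] := hD _ dT (setT `&` closure [set x]) (setT `&` closure [set y])
    (ex_intro _ _ (conj (@closed_closure _ _) erefl))
    (ex_intro _ _ (conj (@closed_closure _ _) erefl))
    (ex_intro _ x (conj I (subset_closure (erefl x))))
    (ex_intro _ y (conj I (subset_closure (erefl y)))).
  have Rxw := symR _ _ (clR _ _ wx).
  exact: (clR _ _ wy U oU (Rxw U oU Ux)).
- move=> hI D _ A B [C [cC ->]] [C' [cC' ->]] [a [Da Ca]] [b [Db C'b]].
  exists a; split; split => //.
  exact: (closed_full _ _ hI cC' (ex_intro _ b C'b) a).
Qed.
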